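(* Let $(X,d)$ be an arbitrary metric space and let $p\in X$. Then the function $$\tau_p(x,y)=\log\Big(1+2\frac{d(x,y)}{\sqrt{d(x,p)d(y,p)}}\Big)$$ is a metric on $X\setminus\{p\}$. *)

(* Defs.v *)
From Stdlib Require Import Reals.
Open Scope R_scope.

Definition is_metric {T : Type} (d : T -> T -> R) : Prop :=
  (forall x y, 0 <= d x y) /\
  (forall x y, d x y = 0 <-> x = y) /\
  (forall x y, d x y = d y x) /\
  (forall x y z, d x z <= d x y + d y z).

Definition punctured (X : Type) (p : X) : Type := { x : X | x <> p }.

Definition tau {X : Type} (d : X -> X -> R) (p : X)
  (x y : punctured X p) : R :=
  ln (1 + 2 * (d (proj1_sig x) (proj1_sig y)
               / sqrt (d (proj1_sig x) p * d (proj1_sig y) p))).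

(* Main.v *)
Require Import Defs.
From Stdlib Require Import Reals.
From Stdlib Require Import Lra Psatz ProofIrrelevance.
Open Scope R_scope.

Lemma my_ln_le x y : 0 < x -> x <= y -> ln x <= ln y.
Proof.
  intros Hx Hxy. destruct (Rle_lt_or_eq_dec _ _ Hxy) as [H|H].
  - left. now apply ln_increasing.
  - rewrite H. lra.
Qed.

Lemma key A B C u v w : 0 < A -> 0 < B -> 0 < C -> 0 <= u -> 0 <= v -> 0 <= w ->
  w <= u + v -> B*B <= C*C + v -> B*B <= A*A + u ->
  1 + 2*(w/(A*C)) <= (1+2*(u/(A*B)))*(1+2*(v/(B*C))).
Proof.
  intros HA HB HC Hu Hv Hw Htri H1 H2.
  assert (Hs : B*C >= B*B - v).
  { destruct (Rle_or_lt B C); nra. }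
  assert (Ht : A*B >= B*B - u).
  { destruct (Rle_or_lt B A); nra. }
  assert (Hk : w*(B*B) <= u*(B*C) + v*(A*B) + 2*u*v).
  { assert (w*(B*B) <= (u+v)*(B*B)) by nra.
    destruct (Rle_or_lt u (B*B)); destruct (Rle_or_lt v (B*B)); nra. }
  assert (E : (1+2*(u/(A*B)))*(1+2*(v/(B*C))) - (1 + 2*(w/(A*C)))
     = 2/(A*(B*B)*C) * (u*(B*C) + v*(A*B) + 2*u*v - w*(B*B))).
  { field. lra. }
  assert (0 <= 2/(A*(B*B)*C)).
  { apply Rlt_le. apply Rdiv_lt_0_compat; [lra|]. repeat apply Rmult_lt_0_compat; lra. }
  nra.
Qed.

Theorem theorem2p1 (X : Type) (d : X -> X -> R) (p : X) :
  is_metric d -> is_metric (tau d p).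
Proof.
  intros [Hpos [Hzero [Hsym Htri]]].
  assert (Hp : forall x : punctured X p, 0 < d (proj1_sig x) p).
  { intros [x Hx]; simpl. destruct (Hpos x p) as [H|H]; auto.
    exfalso. apply Hx. apply Hzero. auto. }
  assert (Hsq : forall x y : punctured X p,
    sqrt (d (proj1_sig x) p * d (proj1_sig y) p) = sqrt (d (proj1_sig x) p) * sqrt (d (proj1_sig y) p)).
  { intros x y. apply sqrt_mult_alt. apply Rlt_le, Hp. }
  assert (Hsp : forall x : punctured X p, 0 < sqrt (d (proj1_sig x) p)).
  { intros x. apply sqrt_lt_R0, Hp. }
  assert (Hdel : forall x y : punctured X p,
     0 <= d (proj1_sig x) (proj1_sig y) / sqrt (d (proj1_sig x) p * d (proj1_sig y) p)).
  { intros x y. rewrite Hsq. apply Rmult_le_pos; [apply Hpos|]. apply Rlt_le, Rinv_0_lt_compat.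
    apply Rmult_lt_0_compat; apply Hsp. }
  unfold tau. split; [|split; [|split]].
  - intros x y. rewrite <- ln_1. apply my_ln_le; [lra|]. specialize (Hdel x y). lra.
  - intros x y. split.
    + intro H. rewrite <- ln_1 in H. apply ln_inv in H; [|specialize (Hdel x y); lra|lra].
      assert (H0 : d (proj1_sig x) (proj1_sig y) / sqrt (d (proj1_sig x) p * d (proj1_sig y) p) = 0) by lra.
      rewrite Hsq in H0.
      assert (H1 : d (proj1_sig x) (proj1_sig y) = 0).
      { assert (Hq : 0 < sqrt (d (proj1_sig x) p) * sqrt (d (proj1_sig y) p))
          by (apply Rmult_lt_0_compat; apply Hsp).
        unfold Rdiv in H0. apply Rmult_integral in H0. destruct H0 as [H0|H0]; auto.
        exfalso. apply (Rinv_neq_0_compat _ (Rgt_not_eq _ _ Hq)). auto. }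
      apply Hzero in H1. destruct x as [x Hx], y as [y Hy]. simpl in H1. subst y.
      f_equal. apply proof_irrelevance.
    + intros ->. rewrite (proj2 (Hzero _ _) eq_refl). unfold Rdiv. rewrite Rmult_0_l.
      rewrite Rmult_0_r, Rplus_0_r. apply ln_1.
  - intros x y. rewrite Hsym, (Rmult_comm (d (proj1_sig x) p)). reflexivity.
  - intros x y z. rewrite <- ln_mult by (pose proof (Hdel x y); pose proof (Hdel y z); lra).
    apply my_ln_le; [pose proof (Hdel x z); lra|].
    rewrite !Hsq.
    pose proof (Hsp x) as HA. pose proof (Hsp y) as HB. pose proof (Hsp z) as HC.
    pose proof (Hp x); pose proof (Hp y); pose proof (Hp z).
    apply key; try assumption; try apply Hpos.
    + apply Htri.
    + rewrite !sqrt_sqrt by lra. pose proof (Htri (proj1_sig y) (proj1_sig z) p). lra.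
    + rewrite !sqrt_sqrt by lra. pose proof (Htri (proj1_sig y) (proj1_sig x) p).
      rewrite (Hsym (proj1_sig y) (proj1_sig x)) in H2. lra.
Qed.
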